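(* Let $L_1,L_2$ be disjoint first-order languages without function symbols, and let $\mathcal M_k$ be an $L_k$-structure for $k=1,2$. Then the standard simple product of $\mathcal M_1$ and $\mathcal M_2$ is a simple product of $\mathcal M_1$ and $\mathcal M_2$.
   Context: Let $M_k$ be the universe of $\mathcal M_k$ and $\pi_k:M_1\times M_2\to M_k$ the projections. For $A\subseteq M_1^n$ and $B\subseteq M_2^n$ put $A*B=\{((a_1,b_1),\ldots,(a_n,b_n))\in(M_1\times M_2)^n:(a_1,\ldots,a_n)\in A,(b_1,\ldots,b_n)\in B\}$. A structure $\mathcal N$ (in any language) is a simple product of $\mathcal M_1$ and $\mathcal M_2$ if its universe is $M_1\times M_2$ and every $\mathcal N$-definable (with parameters) subset of $(M_1\times M_2)^n$ is a Boolean combination of finitely many sets of the form $A*M_2^n$ with $A$ an $\mathcal M_1$-definable subset of $M_1^n$ and $M_1^n*B$ with $B$ an $\mathcal M_2$-definable subset of $M_2^n$. The language $L_{\mathrm{sim}}$ has constant symbols $C_{(c_1,c_2)}$ for each pair of constants $c_1\in L_1$, $c_2\in L_2$, the predicate symbols of $L_1$ and of $L_2$, and two binary predicates $\sim_1,\sim_2$. The standard simple product of $\mathcal M_1,\mathcal M_2$ is the $L_{\mathrm{sim}}$-structure with universe $M_1\times M_2$, where $C_{(c_1,c_2)}$ is interpreted as $(c_1^{\mathcal M_1},c_2^{\mathcal M_2})$, $x\sim_k y$ iff $\pi_k(x)=\pi_k(y)$, and for an $n$-ary predicate $R\in L_k$, $R(\bar c)$ holds iff $\mathcal M_k\models R(\pi_k(\bar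 c))$ ($\pi_k$ applied coordinatewise). *)

(* Defs.v *)
From mathcomp Require Import all_boot.
Set Implicit Arguments. Unset Strict Implicit. Unset Printing Implicit Defensive.

Record language := Language {
  const_sym : Type;
  pred_sym : Type;
  arity : pred_sym -> nat }.

Record structure (L : language) (M : Type) := Structure {
  cst : const_sym L -> M;
  rel : forall R : pred_sym L, ('I_(arity R) -> M) -> Prop }.

Inductive term (L : language) :=
| TVar : nat -> term L
| TConst : const_sym L -> term L.

Inductive formula (L : language) :=
| FFalse : formula L
| FEq : term L -> term L -> formula L
| FRel : forall R : pred_sym L, ('I_(arity R) -> term L) -> formula L
| FNot : formula L -> formula L
| FAnd : formula L -> formula L -> formula L
| FOr : formula L -> formula L -> formula L
| FImp : formula L -> formula L -> formula L
| FEx : nat -> formula L -> formula L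
| FAll : nat -> formula L -> formula L.

Definition update (M : Type) (env : nat -> M) (i : nat) (x : M) : nat -> M :=
  fun j => if j == i then x else env j.

Definition eval_term (L : language) (M : Type) (S : structure L M)
  (env : nat -> M) (t : term L) : M :=
  match t with TVar i => env i | TConst c => cst S c end.

Fixpoint sat (L : language) (M : Type) (S : structure L M)
  (env : nat -> M) (phi : formula L) : Prop :=
  match phi with
  | FFalse => False
  | FEq t1 t2 => eval_term S env t1 = eval_term S env t2
  | FRel R ts => rel S (fun j => eval_term S env (ts j))
  | FNot p => ~ sat S env p
  | FAnd p q => sat S env p /\ sat S env q
  | FOr p q => sat S env p \/ sat S env q
  | FImp p q => sat S env p -> sat S env q
  | FEx i p => exists x : M, sat S (update env i x) p
  | FAll i p => forall x : M, sat S (update env i x) p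
  end.

(* environment: variables 0..n-1 get the tuple a, the others the parameters e *)
Definition extend (M : Type) (n : nat) (a : 'I_n -> M) (e : nat -> M) : nat -> M :=
  fun i => match @insub nat (fun k => k < n) 'I_n i with
           | Some j => a j
           | None => e i
           end.

(* A is S-definable with parameters: given by a formula phi with free
   variables among x_0..x_{n-1} and (parameter) variables x_k, k >= n,
   interpreted by elements e k of M. *)
Definition definable (L : language) (M : Type) (S : structure L M) (n : nat)
  (A : ('I_n -> M) -> Prop) : Prop :=
  exists (phi : formula L) (e : nat -> M),
    forall a, A a <-> sat S (extend a e) phi.

Inductive bool_comb (L1 L2 : language) (M1 M2 : Type)
  (S1 : structure L1 M1) (S2 : structure L2 M2) (n : nat)
  : (('I_n -> M1 * M2) -> Prop) -> Prop :=
| bc_left : forall A, definable S1 A ->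
    bool_comb S1 S2 (fun c => A (fun i => (c i).1))
| bc_right : forall B, definable S2 B ->
    bool_comb S1 S2 (fun c => B (fun i => (c i).2))
| bc_full : bool_comb S1 S2 (fun _ => True)
| bc_compl : forall X, bool_comb S1 S2 X -> bool_comb S1 S2 (fun c => ~ X c)
| bc_inter : forall X Y, bool_comb S1 S2 X -> bool_comb S1 S2 Y ->
    bool_comb S1 S2 (fun c => X c /\ Y c)
| bc_union : forall X Y, bool_comb S1 S2 X -> bool_comb S1 S2 Y ->
    bool_comb S1 S2 (fun c => X c \/ Y c).

Definition is_simple_product (L1 L2 : language) (M1 M2 : Type)
  (S1 : structure L1 M1) (S2 : structure L2 M2)
  (L : language) (N : structure L (M1 * M2)) : Prop :=
  forall (n : nat) (X : ('I_n -> M1 * M2) -> Prop),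
    definable N X ->
    exists Y, bool_comb S1 S2 Y /\ (forall c, X c <-> Y c).

(* The language L_sim: constants = pairs of constants; predicates = the
   (disjoint union of the) predicates of L1 and L2 plus ~1 (true), ~2 (false). *)
Definition sim_arity (L1 L2 : language)
  (R : (pred_sym L1 + pred_sym L2) + bool) : nat :=
  match R with
  | inl (inl R1) => arity R1
  | inl (inr R2) => arity R2
  | inr _ => 2
  end.

Definition L_sim (L1 L2 : language) : language :=
  @Language (const_sym L1 * const_sym L2)
            ((pred_sym L1 + pred_sym L2) + bool) (@sim_arity L1 L2).

Definition sim_rel (L1 L2 : language) (M1 M2 : Type)
  (S1 : structure L1 M1) (S2 : structure L2 M2)
  (R : (pred_sym L1 + pred_sym L2) + bool)
  : ('I_(sim_arity R) -> M1 * M2) -> Prop :=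
  match R as R0 return ('I_(sim_arity R0) -> M1 * M2) -> Prop with
  | inl (inl R1) => fun c => @rel _ _ S1 R1 (fun i => (c i).1)
  | inl (inr R2) => fun c => @rel _ _ S2 R2 (fun i => (c i).2)
  | inr true => fun c => (c ord0).1 = (c (@Ordinal 2 1 isT)).1
  | inr false => fun c => (c ord0).2 = (c (@Ordinal 2 1 isT)).2
  end.

Definition std_simple_product (L1 L2 : language) (M1 M2 : Type)
  (S1 : structure L1 M1) (S2 : structure L2 M2)
  : structure (L_sim L1 L2) (M1 * M2) :=
  @Structure (L_sim L1 L2) (M1 * M2)
    (fun c : const_sym L1 * const_sym L2 => (cst S1 c.1, cst S2 c.2))
    (@sim_rel L1 L2 M1 M2 S1 S2).

(* Main.v *)
Require Import Defs.
From mathcomp Require Import all_boot.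
From Stdlib Require Import Classical FunctionalExtensionality PropExtensionality.
Set Implicit Arguments. Unset Strict Implicit. Unset Printing Implicit Defensive.

Definition ftop (L : language) : formula L := FNot (@FFalse L).

Definition tl1 (L1 L2 : language) (t : term (L_sim L1 L2)) : term L1 :=
  match t with TVar i => @TVar L1 i | TConst c => @TConst L1 c.1 end.
Definition tl2 (L1 L2 : language) (t : term (L_sim L1 L2)) : term L2 :=
  match t with TVar i => @TVar L2 i | TConst c => @TConst L2 c.2 end.

Fixpoint dsat (L1 L2 : language) (M1 M2 : Type)
  (S1 : structure L1 M1) (S2 : structure L2 M2) (env : nat -> M1 * M2)
  (l : seq (formula L1 * formula L2)) : Prop :=
  match l with
  | [::] => False
  | p :: l' => (sat S1 (fun k => (env k).1) p.1 /\ sat S2 (fun k => (env k).2) p.2)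
               \/ dsat S1 S2 env l'
  end.

Fixpoint dconj (L1 L2 : language) (l1 l2 : seq (formula L1 * formula L2)) :=
  match l1 with
  | [::] => [::]
  | p :: l => map (fun q => (FAnd p.1 q.1, FAnd p.2 q.2)) l2 ++ dconj l l2
  end.

Fixpoint dneg (L1 L2 : language) (l : seq (formula L1 * formula L2)) :=
  match l with
  | [::] => [:: (ftop L1, ftop L2)]
  | p :: l' => dconj [:: (FNot p.1, ftop L2); (ftop L1, FNot p.2)] (dneg l')
  end.

Definition dex (L1 L2 : language) (i : nat) (l : seq (formula L1 * formula L2)) :=
  map (fun p => (FEx i p.1, FEx i p.2)) l.

Definition relt (L1 L2 : language) (R : pred_sym (L_sim L1 L2)) :
  ('I_(arity R) -> term (L_sim L1 L2)) -> seq (formula L1 * formula L2) :=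
  match R as R0 return ('I_(@arity (L_sim L1 L2) R0) -> term (L_sim L1 L2)) ->
                        seq (formula L1 * formula L2) with
  | inl (inl R1) => fun ts => [:: (@FRel L1 R1 (fun j => tl1 (ts j)), ftop L2)]
  | inl (inr R2) => fun ts => [:: (ftop L1, @FRel L2 R2 (fun j => tl2 (ts j)))]
  | inr true => fun ts =>
      [:: (FEq (tl1 (ts ord0)) (tl1 (ts (@Ordinal 2 1 isT))), ftop L2)]
  | inr false => fun ts =>
      [:: (ftop L1, FEq (tl2 (ts ord0)) (tl2 (ts (@Ordinal 2 1 isT))))]
  end.

Fixpoint tr (L1 L2 : language) (phi : formula (L_sim L1 L2)) :
  seq (formula L1 * formula L2) :=
  match phi with
  | FFalse => [::]
  | FEq t1 t2 => [:: (FEq (tl1 t1) (tl1 t2), FEq (tl2 t1) (tl2 t2))]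
  | @FRel _ R ts => relt ts
  | FNot p => dneg (tr p)
  | FAnd p q => dconj (tr p) (tr q)
  | FOr p q => tr p ++ tr q
  | FImp p q => dneg (tr p) ++ tr q
  | FEx i p => dex i (tr p)
  | FAll i p => dneg (dex i (dneg (tr p)))
  end.

Section Proofs.
Context (L1 L2 : language) (M1 M2 : Type)
  (S1 : structure L1 M1) (S2 : structure L2 M2).

Notation N := (std_simple_product S1 S2).

Lemma ev1 env t : eval_term S1 (fun k => (env k).1) (tl1 t) = (eval_term N env t).1.
Proof. by case: t. Qed.
Lemma ev2 env t : eval_term S2 (fun k => (env k).2) (tl2 t) = (eval_term N env t).2.
Proof. by case: t. Qed.

Lemma dsat_app env l1 l2 : dsat S1 S2 env (l1 ++ l2) <-> dsat S1 S2 env l1 \/ dsat S1 S2 env l2.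
Proof. elim: l1 => [|p l IH] /=; first tauto. rewrite IH; tauto. Qed.

Lemma dsat_map env p l :
  dsat S1 S2 env (map (fun q => (FAnd p.1 q.1, FAnd p.2 q.2)) l) <->
  (sat S1 (fun k => (env k).1) p.1 /\ sat S2 (fun k => (env k).2) p.2) /\ dsat S1 S2 env l.
Proof. elim: l => [|q l IH] /=; first tauto. rewrite IH; tauto. Qed.

Lemma dsat_conj env l1 l2 : dsat S1 S2 env (dconj l1 l2) <-> dsat S1 S2 env l1 /\ dsat S1 S2 env l2.
Proof. elim: l1 => [|p l IH] /=; first tauto. rewrite dsat_app dsat_map IH; tauto. Qed.

Lemma dsat_neg env l : dsat S1 S2 env (dneg l) <-> ~ dsat S1 S2 env l.
Proof.
elim: l => [|p l IH]; first by rewrite /=; tauto.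
have -> : dneg (p :: l) = dconj [:: (FNot p.1, ftop L2); (ftop L1, FNot p.2)] (dneg l) by [].
rewrite dsat_conj IH /=.
have := classic (sat S1 (fun k => (env k).1) p.1).
have := classic (sat S2 (fun k => (env k).2) p.2).
tauto.
Qed.

Lemma upd1 env i (x : M1 * M2) :
  (fun k => (update env i x k).1) = update (fun k => (env k).1) i x.1.
Proof. apply: functional_extensionality => k; rewrite /update; by case: (k == i). Qed.
Lemma upd2 env i (x : M1 * M2) :
  (fun k => (update env i x k).2) = update (fun k => (env k).2) i x.2.
Proof. apply: functional_extensionality => k; rewrite /update; by case: (k == i). Qed.

Lemma dsat_ex env i l :
  (exists x, dsat S1 S2 (update env i x) l) <-> dsat S1 S2 env (dex i l).
Proof.
elim: l => [|p l IH] /=.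
  by split => // [[x]].
rewrite -IH; split.
- move=> [x [[H1 H2]|H]].
  + left; split; [exists x.1 | exists x.2]; by rewrite -?upd1 -?upd2.
  + by right; exists x.
- move=> [[[a Ha] [b Hb]]|[x Hx]].
  + exists (a, b); left; rewrite upd1 upd2; by split.
  + by exists x; right.
Qed.

Lemma main phi env : sat N env phi <-> dsat S1 S2 env (tr phi).
Proof.
elim: phi env => [|t1 t2|R ts|p IH|p IHp q IHq|p IHp q IHq|p IHp q IHq|i p IH|i p IH] env /=.
- tauto.
- rewrite !ev1 !ev2; case: (eval_term N env t1) => [a b]; case: (eval_term N env t2) => [c d] /=.
  split; first by case=> -> ->; left.
  by case=> // [[-> ->]].
- case: R ts => [[R1|R2]|[]] ts /=.
  + have -> : (fun j => eval_term S1 (fun k => (env k).1) (tl1 (ts j))) =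
              (fun j => (eval_term N env (ts j)).1)
      by apply: functional_extensionality => j; apply: ev1.
    tauto.
  + have -> : (fun j => eval_term S2 (fun k => (env k).2) (tl2 (ts j))) =
              (fun j => (eval_term N env (ts j)).2)
      by apply: functional_extensionality => j; apply: ev2.
    tauto.
  + rewrite !ev1; tauto.
  + rewrite !ev2; tauto.
- rewrite dsat_neg IH; tauto.
- rewrite dsat_conj IHp IHq; tauto.
- rewrite dsat_app IHp IHq; tauto.
- rewrite dsat_app dsat_neg IHp IHq.
  have := classic (dsat S1 S2 env (tr p)); tauto.
- rewrite -dsat_ex; split => [[x Hx]|[x Hx]]; exists x; by apply/IH.
- rewrite dsat_neg -dsat_ex; split.
  + move=> H [x Hx]; move/dsat_neg: Hx; apply; by apply/IH.
  + move=> H x; apply/IH; apply: NNPP => Hn; apply: H; exists x; by apply/dsat_neg.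
Qed.

Lemma bc_ext n (X Y : ('I_n -> M1 * M2) -> Prop) :
  bool_comb S1 S2 X -> (forall c, X c <-> Y c) -> bool_comb S1 S2 Y.
Proof.
move=> H E; have -> : Y = X; last by [].
apply: functional_extensionality => c; apply: propositional_extensionality.
by split; move/E.
Qed.

Lemma bc_dsat n (e : nat -> M1 * M2) l :
  bool_comb S1 S2 (fun c : 'I_n -> M1 * M2 => dsat S1 S2 (extend c e) l).
Proof.
elim: l => [|p l IH] /=.
  by apply: (bc_ext (bc_compl (bc_full S1 S2 n))) => c; tauto.
have Ext1 : forall c : 'I_n -> M1 * M2,
  (fun k => (extend c e k).1) = extend (fun i => (c i).1) (fun k => (e k).1).
  by move=> c; apply: functional_extensionality => k; rewrite /extend; case: insub.
have Ext2 : forall c : 'I_n -> M1 * M2,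
  (fun k => (extend c e k).2) = extend (fun i => (c i).2) (fun k => (e k).2).
  by move=> c; apply: functional_extensionality => k; rewrite /extend; case: insub.
apply: (bc_ext (bc_union (bc_inter
   (@bc_left _ _ _ _ S1 S2 n (fun a => sat S1 (extend a (fun k => (e k).1)) p.1) _)
   (@bc_right _ _ _ _ S1 S2 n (fun b => sat S2 (extend b (fun k => (e k).2)) p.2) _)) IH)).
- by exists p.1, (fun k => (e k).1).
- by exists p.2, (fun k => (e k).2).
- by move=> c /=; rewrite Ext1 Ext2.
Qed.

End Proofs.

Theorem corollary2p10 (L1 L2 : language) (M1 M2 : Type)
  (S1 : structure L1 M1) (S2 : structure L2 M2) :
  is_simple_product S1 S2 (std_simple_product S1 S2).
Proof.
move=> n X [phi [e He]].
exists (fun c => dsat S1 S2 (extend c e) (tr phi)); split.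
  exact: bc_dsat.
by move=> c; rewrite He; apply: main.
Qed.
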